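(* Let $n\ge 4$, $\nu=2^n$, $\sigma^2>0$ and $0<\rho<1$. Suppose the vector of treatment effects $\tau=(\tau(i))_{i\in\Omega}$ is a zero-mean Gaussian random vector with $\operatorname{cov}(\tau(i),\tau(i'))=\sigma^2\rho^{\,\#\{k:\ i_k\neq i'_k\}}$ for all $i,i'\in\Omega$ (equivalently $\operatorname{cov}(\tau)=\sigma^2\mathbf R^{\otimes n}$ in lexicographic order, where $\mathbf R$ is the $2\times 2$ matrix with diagonal entries $1$ and off-diagonal entries $\rho$). Then for every $s\in\{0,1,2\}$, every $1\le l\le n-2$ and every $j=(j_1,\dots,j_n)\in\Omega_{sl}$, $$\operatorname{var}\big(\beta(j_1\cdots j_n)\big)=\sigma^2\nu^{-1}(1+\rho)^{\,n-l-s}(1-\rho)^{\,l}.$$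
   Context: Let $\Omega=\{0,1\}^n$. The conditional effects are defined from treatment effects $\tau(i)$, $i\in\Omega$, by $$\beta(j)=\nu^{-1}\sum_{i\in\Omega} g(j_1,j_2;i_1,i_2)\,g(j_3,j_4;i_3,i_4)\prod_{k=5}^{n}(-1)^{j_k i_k}\,\tau(i),\qquad j\in\Omega,$$ where $g(0,b;a,a')=(-1)^{b a'}$ and $g(1,b;a,a')=\sqrt2\,(-1)^{a}\,\mathbf 1[a'=b]$ for $a,a',b\in\{0,1\}$. (Here $F_1,F_2$ and $F_3,F_4$ are two pairs of conditional/conditioned factors: effects involving $F_1$ are defined conditionally on each level of $F_2$, and those involving $F_3$ conditionally on each level of $F_4$.) For $1\le l\le n-2$ define $\Omega_{0l}=\{j: j_1=j_3=0,\ \text{exactly } l \text{ of } j_2,j_4,j_5,\dots,j_n \text{ equal } 1\}$; $\Omega_{1l}=\{j: j_1=1,\ j_2\in\{0,1\},\ j_3=0,\ \text{exactly } l-1 \text{ of } j_4,\dots,j_n \text{ equal }1\}\cup\{j: j_3=1,\ j_4\in\{0,1\},\ j_1=0,\ \text{exactly } l-1 \text{ of } j_2,j_5,\dots,j_n \text{ equal }1\}$; $\Omega_{2l}=\{j: j_1=j_3=1,\ j_2,j_4\in\{0,1\},\ \text{exactly } l-2 \text{ of } j_5,\dots,j_n \text{ equal }1\}$ (empty when $l=1$). *)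

(* Defs.v *)
From HB Require Import structures.
From mathcomp Require Import all_boot all_order all_algebra.
Set Implicit Arguments. Unset Strict Implicit. Unset Printing Implicit Defensive.
Import Order.TTheory GRing.Theory Num.Theory.
Local Open Scope ring_scope.

(* Omega = {0,1}^n is n.-tuple bool; the paper's coordinate j_k (k = 1..n)
   is the 0-based entry  bit j (k-1). *)
Definition bit (n : nat) (j : n.-tuple bool) (k : nat) : bool := nth false j k.

Definition gfun (R : rcfType) (b1 b2 a a' : bool) : R :=
  if b1 then Num.sqrt 2 * (-1) ^+ a * (a' == b2)%:R
  else (-1) ^+ (b2 && a').

(* coefficient of tau(i) in beta(j) *)
Definition coef (R : rcfType) (n : nat) (j i : n.-tuple bool) : R :=
  ((2 ^ n)%N%:R)^-1
  * gfun R (bit j 0) (bit j 1) (bit i 0) (bit i 1)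
  * gfun R (bit j 2) (bit j 3) (bit i 2) (bit i 3)
  * \prod_(4 <= k < n) (-1) ^+ (bit j k && bit i k).

Definition var_beta (R : rcfType) (n : nat)
  (cov : n.-tuple bool -> n.-tuple bool -> R) (j : n.-tuple bool) : R :=
  \sum_(i : n.-tuple bool) \sum_(i' : n.-tuple bool)
     coef R j i * coef R j i' * cov i i'.

Definition hamming (n : nat) (i i' : n.-tuple bool) : nat :=
  (\sum_(k < n) (bit i k != bit i' k))%N.

Definition ones (n : nat) (j : n.-tuple bool) (ks : seq nat) : nat :=
  count (bit j) ks.

Definition tailpos (n : nat) : seq nat := iota 4 (n - 4).

Definition Omega (n s l : nat) (j : n.-tuple bool) : bool :=
  match s with
  | 0 => [&& ~~ bit j 0, ~~ bit j 2 & ones j (1 :: 3 :: tailpos n) == l]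
  | 1 => [&& bit j 0, ~~ bit j 2 & (ones j (3 :: tailpos n)).+1 == l]
         || [&& bit j 2, ~~ bit j 0 & (ones j (1 :: tailpos n)).+1 == l]
  | _ => [&& bit j 0, bit j 2 & (ones j (tailpos n)).+2 == l]
  end.

(* Main.v *)
Require Import Defs.
From HB Require Import structures.
From mathcomp Require Import all_boot all_order all_algebra.
From mathcomp Require Import ring zify.
Import Order.TTheory GRing.Theory Num.Theory.
Local Open Scope ring_scope.
Set Implicit Arguments. Unset Strict Implicit.





Section S.
Variable R : rcfType.

Lemma sum_tupleS m (F : m.+1.-tuple bool -> R) :
  \sum_(t : m.+1.-tuple bool) F t =
  \sum_(b : bool) \sum_(t : m.-tuple bool) F [tuple of b :: t].
Proof.
rewrite pair_big /=.
rewrite (reindex (fun p : bool * m.-tuple bool => [tuple of p.1 :: p.2])) //=.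
exists (fun t : m.+1.-tuple bool => (thead t, [tuple of behead t])).
  move=> [b t] _ /=; rewrite theadE; congr pair; exact: val_inj.
move=> t _ /=; rewrite [in RHS](tuple_eta t); exact: val_inj.
Qed.

Lemma sum_tuple0 (F : 0.-tuple bool -> R) :
  \sum_(t : 0.-tuple bool) F t = F [tuple].
Proof.
rewrite (eq_bigr (fun _ => F [tuple])); last by move=> t _; rewrite tuple0.
by rewrite sumr_const card_tuple expn0.
Qed.

Lemma key m (h : nat -> bool -> bool -> R) :
  \sum_(i : m.-tuple bool) \sum_(i' : m.-tuple bool)
     \prod_(k < m) h k (nth false i k) (nth false i' k)
  = \prod_(k < m) \sum_(a : bool) \sum_(a' : bool) h k a a'.
Proof.
elim: m h => [|m IH] h.
  by rewrite big_ord0 sum_tuple0 sum_tuple0 big_ord0.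
rewrite big_ord_recl sum_tupleS.
under eq_bigr => b _ do (under eq_bigr => t _ do rewrite sum_tupleS).
rewrite mulr_suml; apply: eq_bigr => b _.
rewrite exchange_big mulr_suml; apply: eq_bigr => b' _ /=.
rewrite -(IH (fun k => h k.+1)) mulr_sumr; apply: eq_bigr => t _.
rewrite mulr_sumr; apply: eq_bigr => t' _.
rewrite big_ord_recl /=; congr (_ * _).
Qed.
Definition fk n (j : n.-tuple bool) (k : nat) (a : bool) : R :=
  match k with
  | 0 => if bit j 0 then Num.sqrt 2 * (-1) ^+ a else 1
  | 1 => if bit j 0 then (a == bit j 1)%:R else (-1) ^+ (bit j 1 && a)
  | 2 => if bit j 2 then Num.sqrt 2 * (-1) ^+ a else 1
  | 3 => if bit j 2 then (a == bit j 3)%:R else (-1) ^+ (bit j 3 && a)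
  | _ => (-1) ^+ (bit j k && a)
  end.

Lemma prod4 n (F : nat -> R) : (4 <= n)%N ->
  \prod_(k < n) F k = F 0%N * F 1%N * F 2%N * F 3%N * \prod_(4 <= k < n) F k.
Proof.
move=> hn; rewrite -(big_mkord xpredT F).
rewrite big_ltn; last by apply: leq_trans hn.
rewrite big_ltn; last by apply: leq_trans hn.
rewrite big_ltn; last by apply: leq_trans hn.
rewrite big_ltn; last by apply: leq_trans hn.
by rewrite !mulrA.
Qed.

Lemma coefE n (j i : n.-tuple bool) : (4 <= n)%N ->
  coef R j i = ((2 ^ n)%N%:R)^-1 * \prod_(k < n) fk j k (bit i k).
Proof.
move=> hn; rewrite (prod4 (fun k => fk j k (bit i k))) // /coef /gfun.
rewrite !mulrA; congr (_ * _).
  by rewrite /fk; case: (bit j 0); case: (bit j 2) => /=; ring.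
by apply: eq_big_nat => k /andP[h4 _]; case: k h4 => [|[|[|[|k]]]].
Qed.


Lemma sqrt2E : Num.sqrt (2:R) * Num.sqrt 2 = 2.
Proof. by rewrite -expr2 sqr_sqrtr // ler0n. Qed.

Definition Qk (rho : R) n (j : n.-tuple bool) k :=
  \sum_(a : bool) \sum_(a' : bool) fk j k a * fk j k a' * rho ^+ (a != a').

Lemma Q0 rho n (j : n.-tuple bool) :
  Qk rho j 0 = if bit j 0 then 4 * (1 - rho) else 2 * (1 + rho).
Proof.
rewrite /Qk /fk !big_bool /=; case: (bit j 0) => /=.
  have h := sqrt2E. rewrite !expr0 !expr1 !mulr1.
  transitivity ((Num.sqrt 2 * Num.sqrt 2) * (2 - 2 * rho)); first ring.
  by rewrite h; ring.
ring.
Qed.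

Lemma Q1 rho n (j : n.-tuple bool) :
  Qk rho j 1 = if bit j 0 then 1 else 2 * (if bit j 1 then 1 - rho else 1 + rho).
Proof.
by rewrite /Qk /fk !big_bool /=; case: (bit j 0); case: (bit j 1) => /=; ring.
Qed.

Lemma Q2 rho n (j : n.-tuple bool) :
  Qk rho j 2 = if bit j 2 then 4 * (1 - rho) else 2 * (1 + rho).
Proof.
rewrite /Qk /fk !big_bool /=; case: (bit j 2) => /=.
  have h := sqrt2E. rewrite !expr0 !expr1 !mulr1.
  transitivity ((Num.sqrt 2 * Num.sqrt 2) * (2 - 2 * rho)); first ring.
  by rewrite h; ring.
ring.
Qed.

Lemma Q3 rho n (j : n.-tuple bool) :
  Qk rho j 3 = if bit j 2 then 1 else 2 * (if bit j 3 then 1 - rho else 1 + rho).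
Proof.
by rewrite /Qk /fk !big_bool /=; case: (bit j 2); case: (bit j 3) => /=; ring.
Qed.

Lemma Qt rho n (j : n.-tuple bool) k : (4 <= k)%N ->
  Qk rho j k = 2 * (if bit j k then 1 - rho else 1 + rho).
Proof.
case: k => [|[|[|[|k]]]] // _.
by rewrite /Qk /fk !big_bool /=; case: (bit j k.+4) => /=; ring.
Qed.

Lemma prod_if (s : seq nat) (p : pred nat) (x y : R) :
  \prod_(k <- s) (2 * (if p k then x else y)) =
  2 ^+ size s * x ^+ count p s * y ^+ count (predC p) s.
Proof.
elim: s => [|a s IH]; first by rewrite big_nil !expr0 !mulr1.
rewrite big_cons IH /=; case: (p a) => /=; rewrite !exprS; ring.
Qed.

End S.

Theorem theorem1 (R : rcfType) (n : nat) (sigma2 rho : R)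
  (cov : n.-tuple bool -> n.-tuple bool -> R) :
  (4 <= n)%N -> 0 < sigma2 -> 0 < rho -> rho < 1 ->
  (forall i i' : n.-tuple bool, cov i i' = sigma2 * rho ^+ hamming i i') ->
  forall (s l : nat) (j : n.-tuple bool),
    (s <= 2)%N -> (1 <= l)%N -> (l <= n - 2)%N -> Omega s l j ->
    var_beta cov j
    = sigma2 * ((2 ^ n)%N%:R)^-1 * (1 + rho) ^+ (n - l - s) * (1 - rho) ^+ l.
Proof.
move=> hn hs hr0 hr1 hcov s l j hs2 hl1 hl2 hom.
have step : forall i i' : n.-tuple bool, coef R j i * coef R j i' * cov i i' =
   sigma2 * ((2 ^ n)%N%:R)^-1 * ((2 ^ n)%N%:R)^-1 *
   \prod_(k < n) (fk R j k (bit i k) * fk R j k (bit i' k) * rho ^+ (bit i k != bit i' k)).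
  move=> i i'; rewrite (coefE _ _ _ hn) (coefE _ _ _ hn) hcov /hamming expr_sum !big_split /=.
  ring.
rewrite /var_beta.
under eq_bigr => i _ do under eq_bigr => i' _ do rewrite step.
under eq_bigr => i _ do rewrite -mulr_sumr.
rewrite -mulr_sumr.
rewrite (@key _ n (fun k a a' => fk R j k a * fk R j k a' * rho ^+ (a != a'))).
rewrite (@prod4 _ n (Qk rho j) hn) Q0 Q1 Q2 Q3.
rewrite (eq_big_nat _ _ (F2 := fun k => 2 * (if bit j k then 1 - rho else 1 + rho)));
  last by move=> k /andP[h4 _]; rewrite Qt.
rewrite -/(tailpos n) prod_if.
have hsz : size (index_iota 4 n) = (n - 4)%N by rewrite /index_iota size_iota.
have hcp := count_predC (bit j) (index_iota 4 n).
rewrite hsz in hcp *.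
move: hom; rewrite /Omega /ones; change (tailpos n) with (index_iota 4 n).
set c := count (bit j) (index_iota 4 n).
set d := count (predC (bit j)) (index_iota 4 n).
have hn' : n = (d + c + 4)%N by lia.
have [E hE] : exists E, (n - l - s)%N = E /\ (E + l + s = n)%N.
  by exists (n - l - s)%N; split => //; lia.
move: hE => [-> hE].
have h2 : (2 ^ n)%N%:R = (2 : R) ^+ d * 2 ^+ c * 2 ^+ 4.
  by rewrite natrX hn' !exprD.
rewrite h2 {h2}.
have nz : (2 : R) ^+ d * 2 ^+ c * 2 ^+ 4 != 0.
  by rewrite !mulf_neq0 // ?expf_neq0 // ?pnatr_eq0.
have -> : (n - 4)%N = (d + c)%N by lia.
have h2d : (2:R) ^+ d != 0 by rewrite expf_neq0 // pnatr_eq0.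
have h2c : (2:R) ^+ c != 0 by rewrite expf_neq0 // pnatr_eq0.

case: s hs2 hE => [|[|[|//]]] _ hE /=;
case: (bit j 0); case: (bit j 1); case: (bit j 2); case: (bit j 3) => /= hom;
rewrite -/c in hom *;
try (exfalso; lia);
first [have -> : l = c by lia | have -> : l = c.+1 by lia | have -> : l = c.+2 by lia | idtac];
first [have -> : E = d by lia | have -> : E = (d+1)%N by lia | have -> : E = (d+2)%N by lia | have -> : E = (d+3)%N by lia | have -> : E = (d+4)%N by lia | idtac];
rewrite ?exprD ?exprS; field; rewrite ?h2d ?h2c ?mulf_neq0 //.

Qed.
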